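(* Consider the following two-bidder sealed-bid first-price common-value auction with limit price $L\ge 0$. A single good has common value $v$, a random variable with CDF $F_v$, density $f_v$, support $\mathbb{R}_+$ and finite mean. Alice submits a (possibly randomized) bid $b_A\ge 0$ knowing only $F_v$. Then $v$ is realized; Bob observes $v$ (but not $b_A$) and submits a bid $\beta(v)\ge 0$. The highest bid wins and the winner pays their bid and receives payoff $v$ minus the bid (the loser gets $0$), except that if the highest bid is strictly below $L$ the good is unsold. Ties: if Alice's and Bob's bids are equal, Bob wins; if Bob's bid equals $L$ he can win; if the winning bid is Alice's and equals exactly $L$, the good is unsold. Assume $\mathbb{E}[v]>L$ and that there exists $\underline v$ in the support of $F_v$ with $$L=\mathbb{E}[\tilde v\mid \tilde v<\underline v],$$ where $\tilde v\sim F_v$. Define $$\beta_L(v)=\begin{cases}\mathbb{E}[\tilde v\mid \tilde v<v] & \text{if } v\ge \underline v,\\ L & \text{if } L<v<\underline v,\\ 0 & \text{if } v\le L.\end{cases}$$ Then the equilibrium (perfect Bayesian Nash equilibrium) bidding strategies are: Bob, upon observing $v$, bids $\beta_L(v)$; Alice uses the mixed strategy in which she draws a value $v'\sim F_v$ (independently of $v$) and bids $\beta_L(v')$.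
   Context: Bidders are risk neutral. $\tilde v$ denotes a generic random variable with CDF $F_v$; conditional expectations are with respect to $F_v$. *)

(* Defs.v *)
From HB Require Import structures.
From mathcomp Require Import all_boot all_order all_algebra.
From mathcomp Require Import all_classical all_reals all_analysis.
Set Implicit Arguments. Unset Strict Implicit. Unset Printing Implicit Defensive.
Import Order.TTheory GRing.Theory Num.Theory.
Local Open Scope classical_set_scope.
Local Open Scope ring_scope.

Section Auction.
Variable R : realType.
Notation mu := (@lebesgue_measure R).

Definition density_on_Rplus (f : R -> R) : Prop :=
  measurable_fun setT f /\
      (forall x, 0 <= f x) /\
      (forall x, x < 0 -> f x = 0) /\
      ((\int[mu]_x (f x)%:E)%E = 1%E) /\
  mu.-integrable setT (fun x => (x * f x)%:E) /\
      (forall x e : R, 0 <= x -> 0 < e ->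
          (0 < \int[mu]_(y in `](x - e)%R, (x + e)%R[%classic) (f y)%:E)%E).

(* CDF: F_v(x) = P(v <= x); P(v < x) is the same (no atoms) *)
Definition cdf (f : R -> R) (x : R) : R := Rintegral mu `]-oo, x] f.
Definition prob_lt (f : R -> R) (x : R) : R := Rintegral mu `]-oo, x[ f.

Definition mean (f : R -> R) : R := Rintegral mu setT (fun y => y * f y).

Definition cond_mean_below (f : R -> R) (x : R) : R :=
  Rintegral mu `]-oo, x[ (fun y => y * f y) / prob_lt f x.

Definition betaL (f : R -> R) (L vl : R) (v : R) : R :=
  if vl <= v then cond_mean_below f v
  else if L < v then L else 0.

Definition payoffA (L a b v : R) : R :=
  if (b < a) && (L < a) then v - a else 0.
Definition payoffB (L a b v : R) : R :=
  if (a <= b) && (L <= b) then v - b else 0.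

Definition exp_payoffA (f : R -> R) (L : R) (beta : R -> R) (a : R) : \bar R :=
  (\int[mu]_v (payoffA L a (beta v) v * f v)%:E)%E.

Definition exp_payoffA_mixed (f : R -> R) (L : R) (beta' beta : R -> R) : \bar R :=
  (\int[mu]_v' ((f v')%:E * exp_payoffA f L beta (beta' v')))%E.

Definition exp_payoffB (f : R -> R) (L : R) (beta' : R -> R) (v b : R) : \bar R :=
  (\int[mu]_v' (payoffB L (beta' v') b v * f v')%:E)%E.

End Auction.

(* Main.v *)
From HB Require Import structures.
From mathcomp Require Import all_boot all_order all_algebra.
From mathcomp Require Import all_classical all_reals all_analysis.
From mathcomp Require Import measurable_realfun.
From mathcomp Require Import ring lra.
Require Import Defs.
Import Order.TTheory GRing.Theory Num.Theory numFieldNormedType.Exports.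
Set Implicit Arguments. Unset Strict Implicit. Unset Printing Implicit Defensive.
Local Open Scope classical_set_scope.
Local Open Scope ring_scope.

Section Aux.
Variable R : realType.
Notation mu := (@lebesgue_measure R).

Lemma patchR (h : R -> R) (A : set R) x : (h \_ A) x = if x \in A then h x else 0.
Proof. by rewrite patchE. Qed.

Definition Int (h : R -> R) := mu.-integrable setT (EFin \o h).

Lemma IntD h1 h2 : Int h1 -> Int h2 -> Int (fun x => h1 x + h2 x).
Proof.
move=> i1 i2; have := integrableD measurableT i1 i2.
by apply: eq_integrable => // x _ /=; rewrite EFinD.
Qed.

Lemma IntB h1 h2 : Int h1 -> Int h2 -> Int (fun x => h1 x - h2 x).
Proof.
move=> i1 i2; have := integrableB measurableT i1 i2.
by apply: eq_integrable => // x _ /=; rewrite EFinB.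
Qed.

Lemma IntZ k h : Int h -> Int (fun x => k * h x).
Proof.
move=> i1; have := integrableZl measurableT k i1.
by apply: eq_integrable => // x _ /=; rewrite EFinM.
Qed.

Lemma IntP h (A : set R) : measurable A -> Int h -> Int (h \_ A).
Proof.
move=> mA ih; rewrite /Int -restrict_EFin; apply/integrable_restrict => //.
rewrite setTI; exact: integrableS ih.
Qed.

Lemma IntS h (A : set R) : measurable A -> Int h -> mu.-integrable A (EFin \o h).
Proof. by move=> mA ih; exact: integrableS ih. Qed.

Lemma Int_meas h : Int h -> measurable_fun setT h.
Proof. by move=> /integrableP[/measurable_realfun.measurable_EFinP]. Qed.

Lemma RintE h (A : set R) : measurable A -> Int h ->
  (Rintegral mu A h)%:E = (\int[mu]_(x in A) (h x)%:E)%E.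
Proof.
move=> mA ih; rewrite /Rintegral fineK //.
by apply: integrable_fin_num => //; exact: IntS.
Qed.

Lemma RintT h (A : set R) : Rintegral mu A h = Rintegral mu setT (h \_ A).
Proof. exact: Rintegral_mkcond. Qed.

Lemma le_RintT h1 h2 : Int h1 -> Int h2 -> (forall x, h1 x <= h2 x) ->
  Rintegral mu setT h1 <= Rintegral mu setT h2.
Proof. by move=> i1 i2 h12; apply: le_Rintegral => //. Qed.

Lemma RintTD h1 h2 : Int h1 -> Int h2 ->
  Rintegral mu setT (fun x => h1 x + h2 x) = Rintegral mu setT h1 + Rintegral mu setT h2.
Proof. by move=> i1 i2; apply: RintegralD. Qed.

Lemma RintTZ k h : Int h ->
  Rintegral mu setT (fun x => k * h x) = k * Rintegral mu setT h.
Proof. by move=> i1; apply: RintegralZl. Qed.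

Lemma Rint_ge0 (A : set R) h : (forall x, A x -> 0 <= h x) -> 0 <= Rintegral mu A h.
Proof. by move=> H; rewrite /Rintegral fine_ge0 // integral_ge0 // => x Ax; rewrite lee_fin; exact: H. Qed.

Lemma Rint_split h x y : Int h -> x <= y ->
  Rintegral mu `]-oo, y[ h = Rintegral mu `]-oo, x[ h + Rintegral mu `[x, y[ h.
Proof.
move=> ih xy.
rewrite (@itv_bndbnd_setU _ _ _ (BLeft x)) ?bnd_simp //.
rewrite Rintegral_setU //; first by rewrite -itv_bndbnd_setU ?bnd_simp //; exact: IntS.
apply/disj_set2P; apply/seteqP; split => z //=.
rewrite !in_itv /= => -[zx /andP[xz _]].
by move: (lt_le_trans zx xz); rewrite ltxx.
Qed.

End Aux.

Section GLsec.
Variable R : realType.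
Notation mu := (@lebesgue_measure R).

Lemma meas_Int (h : R -> R) : Int h -> measurable_fun setT (EFin \o h).
Proof. by case/integrableP. Qed.

Lemma lim_le0 (h : R -> R) (A : set R) (t : nat -> R) : Int h -> measurable A ->
  (forall s, A s -> \forall n \near \oo, s < t n) ->
  (forall s n, s < t n -> A s) ->
  (\forall n \near \oo, Rintegral mu `]-oo, t n[ h <= 0) ->
  Rintegral mu A h <= 0.
Proof.
move=> ih mA HA HB Hn.
pose fn := fun n => EFin \o (h \_ `]-oo, t n[).
have H1 : forall x, fn ^~ x @ \oo --> (EFin \o (h \_ A)) x.
  move=> x; apply: cvg_near_cst.
  have [Ax|nAx] := pselect (A x).
    near=> n; have xn : x < t n by near: n; exact: HA.
    by rewrite /fn /= !patchE (mem_set Ax) mem_set //=.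
  apply: nearW => n; rewrite /fn /= !patchE (memNset nAx).
  case: ifPn => // /set_mem xn; exfalso; apply: nAx; apply: (HB x n).
  by move: xn; rewrite /= ?in_itv /= ?andbT.
have H2 : forall x n, (`|fn n x| <= (abse \o (EFin \o h)) x)%E.
  move=> x n; rewrite /fn /= patchE.
  by case: ifPn => _; rewrite ?normr0 ?abse0 ?lee_fin //.
have Hae1 : {ae mu, forall x, setT x -> fn ^~ x @ \oo --> (EFin \o (h \_ A)) x}.
  by apply: aeW => x _; exact: H1.
have Hae2 : {ae mu, forall x n, setT x -> (`|fn n x| <= (abse \o (EFin \o h)) x)%E}.
  by apply: aeW => x n _; exact: H2.
have := @dominated_convergence _ _ _ mu setT measurableT fn
   (EFin \o (h \_ A)) (abse \o (EFin \o h))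
   (fun n => meas_Int (IntP (measurable_itv _) ih)) (meas_Int (IntP mA ih))
   Hae1 (integrable_abse ih) Hae2.
case=> _ _ Hc.
rewrite -lee_fin RintE // integral_mkcond restrict_EFin.
rewrite -(cvg_lim _ Hc) //; apply: lime_le; first by apply/cvg_ex; eexists; exact: Hc.
move: Hn; apply: filterS => n Hn /=.
by rewrite /fn -restrict_EFin -integral_mkcond -RintE // ?lee_fin //; exact: measurable_itv.
Unshelve. all: by end_near.
Qed.

Lemma downset_shape (S : set R) (v0 : R) : S v0 ->
  (forall s t, s <= t -> S t -> S s) ->
  S = setT \/ exists x, v0 <= x /\ (S = `]-oo, x]%classic \/ (v0 < x /\ S = `]-oo, x[%classic)).
Proof.
move=> Sv0 down.
have [[M ubM]|nub] := pselect (exists M, ubound S M); last first.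
  left; apply/seteqP; split => s // _.
  apply: contrapT => nSs; apply: nub; exists s => t St.
  rewrite leNgt; apply/negP => st; exact: nSs (down s t (ltW st) St).
have hs : has_sup S by split; [exists v0|exists M].
set x := sup S.
have xub := sup_upper_bound hs.
have inner : forall s, s < x -> S s.
  move=> s sx; have xs0 : 0 < x - s by rewrite subr_gt0.
  have [e Se lte] := @sup_adherent _ S (x - s) xs0 hs.
  apply: (down s e) Se; rewrite ltW //; move: lte; rewrite -/x; lra.
right; exists x; split; first exact: xub.
have [Sx|nSx] := pselect (S x).
  left; apply/seteqP; split => s; rewrite /= in_itv /=.
    by move=> Ss; exact: xub.
  rewrite le_eqVlt => /orP[/eqP ->//|]; exact: inner.
right; split.
  rewrite lt_neqAle xub // andbT; apply/eqP => ev; apply: nSx; rewrite -ev //.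
apply/seteqP; split => s; rewrite /= in_itv /=.
  move=> Ss; rewrite lt_neqAle xub // andbT; apply/eqP => sx; apply: nSx.
  by rewrite -sx.
exact: inner.
Qed.

End GLsec.

Section Main.
Variable R : realType.
Notation mu := (@lebesgue_measure R).
Variable f : R -> R.
Hypothesis mf : measurable_fun setT f.
Hypothesis f0 : forall x, 0 <= f x.
Hypothesis f1 : (\int[mu]_x (f x)%:E = 1)%E.
Hypothesis ixf : mu.-integrable setT (fun x => (x * f x)%:E).
Hypothesis fsupp : forall x e : R, 0 <= x -> 0 < e ->
  (0 < \int[mu]_(y in `](x - e)%R, (x + e)%R[%classic) (f y)%:E)%E.

Lemma Int_f : Int f.
Proof.
apply/integrableP; split; first exact/measurable_realfun.measurable_EFinP.
under eq_integral => x _ do rewrite /= ger0_norm //.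
by rewrite f1 ltry.
Qed.

Lemma Int_xf : Int (fun x => x * f x).
Proof. exact: ixf. Qed.

Definition g c := fun s => (s - c) * f s.

Lemma Int_g c : Int (g c).
Proof.
have := IntB Int_xf (IntZ c Int_f).
by rewrite /g; congr Int; apply/funext => x; rewrite mulrBl.
Qed.

Definition P x := prob_lt f x.
Definition N x := Rintegral mu `]-oo, x[ (fun y => y * f y).
Definition phi c x := Rintegral mu `]-oo, x[ (g c).
Definition m x := cond_mean_below f x.

Lemma Rint_le (A : set R) h1 h2 : measurable A -> Int h1 -> Int h2 ->
  (forall s, A s -> h1 s <= h2 s) -> Rintegral mu A h1 <= Rintegral mu A h2.
Proof. by move=> mA i1 i2 H; apply: le_Rintegral => //; exact: IntS. Qed.

Lemma Rint_sub (A B : set R) h : measurable A -> measurable B -> A `<=` B -> Int h ->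
  (forall s, B s -> 0 <= h s) -> Rintegral mu A h <= Rintegral mu B h.
Proof.
move=> mA mB AB ih H; rewrite (RintT _ A) (RintT _ B).
apply: le_RintT; [exact: IntP|exact: IntP|] => s; rewrite !patchE.
case: ifPn => [/set_mem sA|_]; first by rewrite mem_set //; exact: AB.
by case: ifPn => // /set_mem; exact: H.
Qed.

Lemma phiE c x : phi c x = N x - c * P x.
Proof.
rewrite /phi /g /N /P /prob_lt.
rewrite -RintegralZl //; last exact: IntS Int_f.
rewrite -RintegralB //; [|exact: IntS Int_xf|exact: IntS (IntZ c Int_f)].
by apply: eq_Rintegral => s _; rewrite mulrBl.
Qed.

Lemma P_ge0 x : 0 <= P x.
Proof. by apply: Rint_ge0 => s _. Qed.

Lemma P_mono x y : x <= y -> P x <= P y.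
Proof.
move=> xy; rewrite /P /prob_lt (Rint_split Int_f xy) lerDl.
by apply: Rint_ge0 => s _.
Qed.

Lemma N_le x : N x <= x * P x.
Proof.
rewrite /N /P /prob_lt -RintegralZl //; last exact: IntS Int_f.
apply: Rint_le; [by []|exact: Int_xf|exact: IntZ Int_f|].
move=> s; rewrite /= in_itv /= => sx; apply: ler_wpM2r => //; exact: ltW.
Qed.

Lemma phi_le0 c x : x <= c -> phi c x <= 0.
Proof.
move=> xc; rewrite phiE subr_le0 (le_trans (N_le x)) //.
by apply: ler_wpM2r => //; exact: P_ge0.
Qed.

Lemma phi_mono c x y : c <= x -> x <= y -> phi c x <= phi c y.
Proof.
move=> cx xy; rewrite /phi (Rint_split (Int_g c) xy) lerDl.
apply: Rint_ge0 => s; rewrite /= in_itv /= => /andP[xs _].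
by rewrite /g mulr_ge0 // subr_ge0 (le_trans cx).
Qed.

Lemma phiPm c x : 0 < P x -> phi c x = P x * (m x - c).
Proof.
move=> Px; rewrite phiE /m /cond_mean_below -/(P x) -/(N x).
by field; rewrite gt_eqF.
Qed.

Lemma phi_m x : 0 < P x -> phi (m x) x = 0.
Proof. by move=> Px; rewrite phiPm // subrr mulr0. Qed.

Lemma m_le x : 0 < P x -> m x <= x.
Proof.
move=> Px; have := phi_le0 (lexx x); rewrite phiPm // pmulr_rle0 //.
by rewrite subr_le0.
Qed.

Lemma m_mono x y : 0 < P x -> x <= y -> m x <= m y.
Proof.
move=> Px xy; have Py : 0 < P y by apply: lt_le_trans Px (P_mono xy).
have := phi_mono (m_le Px) xy; rewrite phi_m // phiPm // pmulr_rge0 //.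
by rewrite subr_ge0.
Qed.

Lemma pos_int a b : 0 <= a -> a < b -> 0 < Rintegral mu `]a, b[ f.
Proof.
move=> a0 ab.
have H := fsupp (x := (a + b) / 2) (e := (b - a) / 2).
rewrite (_ : (a + b) / 2 - (b - a) / 2 = a) in H; last by field.
rewrite (_ : (a + b) / 2 + (b - a) / 2 = b) in H; last by field.
rewrite -lte_fin RintE //; last exact: Int_f.
apply: H; first lra.
lra.
Qed.

Lemma m_strict x y : 0 < P x -> 0 <= x -> x < y -> m x < m y.
Proof.
move=> Px x0 xy; have Py : 0 < P y by apply: lt_le_trans Px (P_mono (ltW xy)).
suff : 0 < phi (m x) y by rewrite phiPm // pmulr_rgt0 // subr_gt0.
rewrite /phi (Rint_split (Int_g _) (ltW xy)) -/(phi (m x) x) phi_m // add0r.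
set u := (x + y) / 2.
have xu : x < u by rewrite /u; lra.
have uy : u < y by rewrite /u; lra.
apply: (@lt_le_trans _ _ (Rintegral mu `]u, y[ (fun s => (u - x) * f s))).
  rewrite RintegralZl //; last exact: IntS Int_f.
  by rewrite mulr_gt0 ?subr_gt0 // pos_int // (le_trans x0) // ltW.
apply: (@le_trans _ _ (Rintegral mu `]u, y[ (g x))).
  apply: Rint_le; [by []|exact: IntZ Int_f|exact: Int_g|].
  move=> s; rewrite /= in_itv /= => /andP[us _]; rewrite /g.
  by apply: ler_wpM2r => //; rewrite lerD2r ltW.
apply: (@le_trans _ _ (Rintegral mu `[x, y[ (g x))).
  apply: Rint_sub; [by []|by []| |exact: Int_g|].
    move=> s; rewrite /= !in_itv /= => /andP[us ->]; rewrite andbT.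
    by rewrite ltW // (lt_trans xu).
  move=> s; rewrite /= in_itv /= => /andP[xs _]; rewrite /g.
  by rewrite mulr_ge0 // subr_ge0.
apply: Rint_le; [by []|exact: Int_g|exact: Int_g|].
move=> s _; rewrite /g; apply: ler_wpM2r => //; rewrite lerD2l lerN2.
exact: m_le.
Qed.



Lemma near_inv (d : R) : 0 < d -> \forall n \near \oo, (n.+1%:R)^-1 < d.
Proof.
move=> d0; near=> n.
have h : d^-1 < n%:R by near: n; exact: nbhs_infty_gtr.
rewrite invf_plt ?posrE ?ltr0Sn //; apply: lt_le_trans h _.
by rewrite ler_nat.
Unshelve. all: by end_near.
Qed.

Lemma GL (S : set R) c vl : S vl -> (forall s t, s <= t -> S t -> S s) ->
  (forall t, S t -> vl <= t -> phi c t <= 0) ->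
  measurable S /\ Rintegral mu S (g c) <= 0.
Proof.
move=> Svl down H.
have [ST|[x [vlx [Sx|[vlx' Sx]]]]] := downset_shape Svl down.
- rewrite ST; split => //.
  apply: (@lim_le0 _ _ _ (fun n => n%:R)) => //.
  + exact: Int_g.
  + move=> s _; exact: nbhs_infty_gtr.
  + near=> n; apply: H; first by rewrite ST.
    by near: n; exact: nbhs_infty_ger.
- rewrite Sx; split; first exact: measurable_itv.
  rewrite -Rintegral_itv_bndo_bndc; last exact: IntS (Int_g c).
  apply: H vlx; rewrite Sx /= in_itv /= lexx //.
- rewrite Sx; split; first exact: measurable_itv.
  apply: (@lim_le0 _ _ _ (fun n => x - (n.+1%:R)^-1)) => //.
  + exact: Int_g.
  + move=> s; rewrite /= in_itv /= => sx.
    have : 0 < x - s by rewrite subr_gt0.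
    move/near_inv; apply: filterS => n /= hn.
    move: hn; set e := (_^-1); lra.
  + move=> s n /=; rewrite in_itv /=.
    have : 0 < (n.+1%:R)^-1 :> R by rewrite invr_gt0 ltr0Sn.
    set e := (_^-1); lra.
  + have : 0 < x - vl by rewrite subr_gt0.
    move/near_inv; apply: filterS => n /= hn.
    have hp : 0 < (n.+1%:R)^-1 :> R by rewrite invr_gt0 ltr0Sn.
    move: hn hp; set e := (_^-1) => hn hp.
    apply: H; last by lra.
    rewrite Sx /= in_itv /=; lra.
Unshelve. all: by end_near.
Qed.

Variables (L vl : R).
Hypothesis hL0 : 0 <= L.
Hypothesis hvl0 : 0 <= vl.
Hypothesis hPvl : 0 < P vl.
Hypothesis hLm : L = m vl.
Notation beta := (betaL f L vl).

Lemma Pt t : vl <= t -> 0 < P t.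
Proof. by move=> vt; apply: lt_le_trans hPvl (P_mono vt). Qed.

Lemma mL t : vl <= t -> L <= m t.
Proof. by move=> vt; rewrite hLm; exact: m_mono. Qed.

Lemma b_ge t : vl <= t -> beta t = m t.
Proof. by move=> vt; rewrite /betaL vt. Qed.

Lemma b_lt t : t < vl -> 0 <= beta t <= L.
Proof.
move=> tv; rewrite /betaL (leNgt vl t) tv /=.
by case: ifP => _; rewrite ?lexx ?hL0.
Qed.

Lemma b_mono s t : s <= t -> beta s <= beta t.
Proof.
move=> st.
have [vs|sv] := leP vl s.
  by rewrite !b_ge ?(le_trans vs) //; exact: m_mono (Pt vs) st.
have /andP[_ bsL] := b_lt sv.
have [vt|tv] := leP vl t; first by rewrite (b_ge vt); exact: le_trans bsL (mL vt).
rewrite /betaL (leNgt vl s) sv (leNgt vl t) tv /=.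
case: ifP => Ls; first by rewrite ifT // (lt_le_trans Ls st).
by case: ifP.
Qed.

Lemma Rint_le0 h : Int h -> (forall x, h x <= 0) -> Rintegral mu setT h <= 0.
Proof.
move=> ih H; apply: (@le_trans _ _ (Rintegral mu setT (fun x => 0 * f x))).
  by apply: le_RintT => //; [exact: IntZ Int_f|move=> x; rewrite mul0r].
by rewrite RintTZ ?mul0r //; exact: Int_f.
Qed.

Lemma payA_le0 a : (exp_payoffA f L beta a <= 0)%E.
Proof.
rewrite /exp_payoffA /payoffA.
have [La|aL] := ltP L a; last first.
  by rewrite integral0_eq // => v _ /=; rewrite andbF mul0r.
pose S := [set v | beta v < a].
have [mS HS] : measurable S /\ Rintegral mu S (g a) <= 0.
  apply: (@GL S a vl).
  - by rewrite /S /= b_ge // -hLm.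
  - by move=> s t st; rewrite /S /=; apply: le_lt_trans (b_mono st).
  - move=> t; rewrite /S /= => bt vt.
  by rewrite phiPm ?Pt // pmulr_rle0 ?Pt // subr_le0 -b_ge // ltW.
rewrite (_ : (\int[mu]_v _)%E = (Rintegral mu setT ((g a) \_ S))%:E); last first.
  rewrite RintE //; last exact: IntP (Int_g a).
  apply: eq_integral => v _; rewrite patchE andbT /S.
  have [bv|bv] := ltP (beta v) a; first by rewrite mem_set.
  rewrite memNset ?mul0r //; apply/negP; rewrite -leNgt //.
by rewrite -RintT lee_fin.
Qed.

Lemma payA_beta v' : exp_payoffA f L beta (beta v') = 0%E.
Proof.
rewrite /exp_payoffA /payoffA.
have [La|aL] := ltP L (beta v'); last first.
  by rewrite integral0_eq // => v _ /=; rewrite andbF mul0r.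
have vlv : vl < v'.
  have [v'v|vv'] := ltP v' vl.
    by have /andP[_ bL] := b_lt v'v; move: La; rewrite ltNge bL.
  rewrite lt_neqAle vv' andbT; apply/eqP => e; move: La.
  by rewrite -e b_ge // -hLm ltxx.
have hb : beta v' = m v' by rewrite b_ge // ltW.
have key : forall v, (beta v < beta v') = (v < v').
  move=> v; rewrite hb; have [vv'|v'v] := ltP v v'.
    have [vlv0|vvl] := leP vl v.
      by rewrite b_ge // m_strict // ?Pt // (le_trans hvl0).
    have /andP[_ bL] := b_lt vvl; apply: le_lt_trans bL _; rewrite -hb //.
  apply/negbTE; rewrite -leNgt b_ge; first exact: m_mono (Pt (ltW vlv)) v'v.
  exact: le_trans (ltW vlv) v'v.
rewrite (_ : (\int[mu]_v _)%E = (Rintegral mu setT ((g (beta v')) \_ `]-oo, v'[))%:E); last first.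
  rewrite RintE //; last exact: IntP (measurable_itv _) (Int_g _).
  apply: eq_integral => v _; rewrite patchE andbT key.
  have [vv|vv] := ltP v v'; first by rewrite mem_set //= in_itv /= vv.
  rewrite memNset ?mul0r //= in_itv /=; apply/negP; rewrite -leNgt //.
by rewrite -RintT hb -/(phi _ _) phi_m ?Pt // ltW.
Qed.

Lemma payA_mixed : exp_payoffA_mixed f L beta beta = 0%E.
Proof. by rewrite /exp_payoffA_mixed integral0_eq // => v' _; rewrite payA_beta mule0. Qed.

Lemma GLB b : L <= b ->
  measurable [set t | beta t <= b] /\ Rintegral mu [set t | beta t <= b] (g b) <= 0.
Proof.
move=> Lb; apply: GL.
- by rewrite /= b_ge // -hLm.
- by move=> s t st /=; apply: le_trans (b_mono st).
- move=> t /= bt vt.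
  by rewrite phiPm ?Pt // pmulr_rle0 ?Pt // subr_le0 -b_ge.
Qed.

Lemma payB_expr v b : L <= b -> exp_payoffB f L beta v b =
  (Rintegral mu setT ((fun t => (v - b) * f t) \_ [set t | beta t <= b]))%:E.
Proof.
move=> Lb; have [mT _] := GLB Lb.
rewrite /exp_payoffB /payoffB RintE //; last exact: IntP mT (IntZ _ Int_f).
apply: eq_integral => t _; rewrite patchE Lb andbT.
have [bv|bv] := leP (beta t) b; first by rewrite mem_set.
rewrite memNset ?mul0r //; apply/negP; rewrite -ltNge //.
Qed.

Definition hv v := fun t => (v - t) * f t.

Lemma Int_hv v : Int (hv v).
Proof.
have := IntB (IntZ v Int_f) Int_xf.
by rewrite /hv; congr Int; apply/funext => x; rewrite mulrBl.
Qed.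

Lemma hvE v w : Rintegral mu `]-oo, w[ (hv v) = v * P w - N w.
Proof.
rewrite /hv /N /P /prob_lt.
rewrite -RintegralZl //; last exact: IntS Int_f.
rewrite -RintegralB //; [|exact: IntS (IntZ v Int_f)|exact: IntS Int_xf].
by apply: eq_Rintegral => s _; rewrite mulrBl.
Qed.

Lemma payB_UB v b w : L <= b -> v <= w ->
  (forall t, t < w -> ~ (beta t <= b) -> t <= v) ->
  (exp_payoffB f L beta v b <= (v * P w - N w)%:E)%E.
Proof.
move=> Lb vw Hw; have [mT HT] := GLB Lb; rewrite payB_expr // lee_fin.
set T := [set t | beta t <= b].
have e1 : Rintegral mu setT ((fun t => (v - b) * f t) \_ T) =
    Rintegral mu setT ((hv v) \_ T) + Rintegral mu setT ((g b) \_ T).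
  rewrite -RintTD; [|exact: IntP mT (Int_hv v)|exact: IntP mT (Int_g b)].
  apply: eq_Rintegral => t _; rewrite !patchE; case: ifP => _; last by rewrite addr0.
  by rewrite /hv /g; ring.
rewrite e1 -(RintT (g b) T).
apply: (@le_trans _ _ (Rintegral mu setT ((hv v) \_ T))); first by lra.
apply: (@le_trans _ _ (Rintegral mu setT ((hv v) \_ `]-oo, w[))); last first.
  by rewrite -RintT hvE.
apply: le_RintT; [exact: IntP mT (Int_hv v)|exact: IntP (measurable_itv _) (Int_hv v)|].
move=> t; rewrite !patchR /hv.
have [bt|bt] := leP (beta t) b; rewrite ?(mem_set (bt : T t)).
  have [tw|tw] := ltP t w; first by rewrite mem_set //= in_itv /= tw.
  rewrite memNset; last by rewrite /= in_itv /= ltNge tw.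
  by rewrite mulr_le0_ge0 // subr_le0 (le_trans vw).
rewrite memNset; last by move=> /= h; move: bt; rewrite ltNge h.
have [tw|tw] := ltP t w; last by rewrite memNset ?lexx //= in_itv /= ltNge tw.
rewrite mem_set /=; last by rewrite in_itv /= tw.
by rewrite mulr_ge0 // subr_ge0; apply: Hw => // h; move: bt; rewrite ltNge h.
Qed.

Lemma payB_low v b : b < L -> exp_payoffB f L beta v b = 0%E.
Proof.
move=> bL; rewrite /exp_payoffB integral0_eq // => t _ /=.
by rewrite /payoffB (leNgt L b) bL andbF mul0r.
Qed.

Lemma payB_opt v b : 0 <= v -> 0 <= b ->
  (exp_payoffB f L beta v b <= exp_payoffB f L beta v (beta v))%E.
Proof.
move=> v0 b0.
have [vlv|vvl] := leP vl v.
  have Pv := Pt vlv.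
  have own : ((v * P v - N v)%:E <= exp_payoffB f L beta v (beta v))%E.
    rewrite (b_ge vlv) payB_expr ?mL // lee_fin.
    apply: (@le_trans _ _ (Rintegral mu setT ((fun t => (v - m v) * f t) \_ `]-oo, v[))).
      rewrite -RintT RintegralZl //; last exact: IntS Int_f.
      have h0 := phi_m Pv; rewrite phiE in h0.
      rewrite -/(prob_lt f v) -/(P v); nra.
    apply: le_RintT; [exact: IntP (measurable_itv _) (IntZ _ Int_f)|
                      exact: IntP (proj1 (GLB (mL vlv))) (IntZ _ Int_f)|].
    have mv := m_le Pv.
    move=> t; rewrite !patchR.
    have [tv|tv] := ltP t v.
      rewrite mem_set; last by rewrite /= in_itv /= tv.
      rewrite mem_set //= -(b_ge vlv); exact: b_mono (ltW tv).
    rewrite memNset; last by rewrite /= in_itv /= ltNge tv.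
    by case: ifP => _; rewrite // mulr_ge0 // subr_ge0.
  apply: le_trans own.
  have [bL|Lb] := ltP b L.
    rewrite payB_low // lee_fin -hvE; apply: Rint_ge0 => t; rewrite /= in_itv /= => tv.
    by rewrite /hv mulr_ge0 // subr_ge0 ltW.
  apply: payB_UB => // t tv _; exact: ltW.
have [Lv|vL] := ltP L v.
  have bv : beta v = L by rewrite /betaL (leNgt vl v) vvl Lv.
  have own : ((v * P vl - N vl)%:E <= exp_payoffB f L beta v (beta v))%E.
    rewrite bv payB_expr // lee_fin.
    apply: (@le_trans _ _ (Rintegral mu setT ((fun t => (v - L) * f t) \_ `]-oo, vl[))).
      rewrite -RintT RintegralZl //; last exact: IntS Int_f.
      have h0 := phi_m hPvl; rewrite phiE -hLm in h0.
      rewrite -/(prob_lt f vl) -/(P vl); nra.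
    apply: le_RintT; [exact: IntP (measurable_itv _) (IntZ _ Int_f)|
                      exact: IntP (proj1 (GLB (lexx L))) (IntZ _ Int_f)|].
    move=> t; rewrite !patchR.
    have [tv|tv] := ltP t vl.
      rewrite mem_set; last by rewrite /= in_itv /= tv.
      by have /andP[_ bL] := b_lt tv; rewrite mem_set.
    rewrite memNset; last by rewrite /= in_itv /= ltNge tv.
    by case: ifP => _; rewrite // mulr_ge0 // subr_ge0 ltW.
  apply: le_trans own.
  have [bL|Lb] := ltP b L.
    rewrite payB_low // lee_fin.
    have h0 := phi_m hPvl; rewrite phiE -hLm in h0.
    have := hPvl; nra.
  apply: payB_UB => //; first exact: ltW.
  move=> t tv h; exfalso; apply: h; have /andP[_ bL] := b_lt tv; exact: le_trans bL Lb.
have bv : beta v = 0 by rewrite /betaL (leNgt vl v) vvl (ltNge L v) vL.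
have -> : exp_payoffB f L beta v (beta v) = 0%E.
  rewrite bv /exp_payoffB integral0_eq // => t _ /=; rewrite /payoffB.
  case: ifP => [/andP[_ L0]|_]; last by rewrite mul0r.
  have -> : v = 0 by lra.
  by rewrite subr0 mul0r.
have [bL|Lb] := ltP b L; first by rewrite payB_low.
rewrite payB_expr // lee_fin; apply: Rint_le0.
  exact: IntP (proj1 (GLB Lb)) (IntZ _ Int_f).
move=> t; rewrite patchR; case: ifP => // _.
by rewrite mulr_le0_ge0 // subr_le0 (le_trans vL).
Qed.

End Main.

Theorem theorem1 (R : realType) (f : R -> R) (L : R) :
  density_on_Rplus f ->
  0 <= L ->
  L < mean f ->
  forall vl : R, 0 <= vl -> 0 < prob_lt f vl -> L = cond_mean_below f vl ->
  (forall a : R, 0 <= a ->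
     (exp_payoffA f L (betaL f L vl) a
      <= exp_payoffA_mixed f L (betaL f L vl) (betaL f L vl))%E)
  /\
  (forall v : R, 0 <= v -> forall b : R, 0 <= b ->
     (exp_payoffB f L (betaL f L vl) v b
      <= exp_payoffB f L (betaL f L vl) v (betaL f L vl v))%E).
Proof.
move=> [mf [f0 [_ [f1 [ixf fsupp]]]]] L0 _ vl vl0 Pvl Lm.
split.
  move=> a _; rewrite payA_mixed //.
  by apply: payA_le0.
move=> v v0 b b0; by apply: payB_opt.
Qed.
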